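(* Let $U_{d,n}$ be a simple uniform matroid. The following are equivalent: (1) $U_{d,n}$ is regular; (2) $U_{d,n}$ is binary; (3) $U_{d,n}$ has a unique minimal tropical basis.
   Context: For natural numbers $n\ge d$, the uniform matroid $U_{d,n}$ has ground set $[n]=\{1,\dots,n\}$, and its circuits are all $(d+1)$-element subsets of $[n]$. A matroid is simple if every circuit has cardinality greater than $2$. It is binary if it is representable over $\mathbb F_2$, and regular if it is representable over every field. For a matroid $M=([n],\mathscr C)$, let ${\bf TP}^{n-1}$ be the tropical projective space over $(\mathbb R\cup\{-\infty\},\max,+)$. For a circuit $C$, $V(C)$ is the set of $x\in{\bf TP}^{n-1}$ such that $\max\{x_i:i\in C\}$ is attained at least twice. For $B\subseteq\mathscr C$, set $V(B)=\bigcap_{C\in B}V(C)$. A subset $B\subseteq \mathscr C$ is a tropical basis if $V(B)=V(\mathscr C)$. It is a minimal tropical basis if no proper subset of it is a tropical basis. *)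

(* Defs.v *)
From Stdlib Require Import Reals.
From HB Require Import structures.
From mathcomp Require Import all_boot all_order all_algebra.
Set Implicit Arguments. Unset Strict Implicit. Unset Printing Implicit Defensive.
Import GRing.Theory.

(* A matroid on the ground set [n] = 'I_n is given by its set of circuits. *)

Definition uniform_circuits (d n : nat) : {set {set 'I_n}} :=
  [set S : {set 'I_n} | #|S| == d.+1].

Definition simple_matroid n (Cs : {set {set 'I_n}}) : Prop :=
  forall C, C \in Cs -> 2 < #|C|.

Definition cols_indep (F : fieldType) r n (A : 'M[F]_(r, n)) (S : {set 'I_n}) : Prop :=
  forall a : 'I_n -> F,
    (\sum_(i in S) a i *: col i A)%R = 0%R -> forall i, i \in S -> a i = 0%R.

Definition representable (F : fieldType) n (Cs : {set {set 'I_n}}) : Prop :=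
  exists (r : nat) (A : 'M[F]_(r, n)), forall S : {set 'I_n},
    cols_indep A S <-> ~ (exists2 C, C \in Cs & C \subset S).

Definition binary n (Cs : {set {set 'I_n}}) : Prop := representable ('F_2 : fieldType) Cs.

Definition regular n (Cs : {set {set 'I_n}}) : Prop :=
  forall F : fieldType, representable F Cs.

(* Tropical numbers R ∪ {-oo}: None stands for -oo. *)
Definition trop := option R.
Definition trop_le (a b : trop) : Prop :=
  match a, b with
  | None, _ => True
  | Some _, None => False
  | Some x, Some y => Rle x y
  end.

(* Representatives of points of TP^{n-1}: vectors not identically -oo.
   All sets V(.) below are invariant under adding a real constant, so we
   work with representatives. *)
Definition tpoint n (x : 'I_n -> trop) : Prop := exists i, x i <> None.

Definition in_V n (C : {set 'I_n}) (x : 'I_n -> trop) : Prop :=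
  exists i j, [/\ i \in C, j \in C, i != j, x i = x j &
                  forall k, k \in C -> trop_le (x k) (x i)].

Definition V_of n (B : {set {set 'I_n}}) (x : 'I_n -> trop) : Prop :=
  tpoint x /\ forall C, C \in B -> in_V C x.

Definition tropical_basis n (Cs B : {set {set 'I_n}}) : Prop :=
  B \subset Cs /\ forall x, V_of B x <-> V_of Cs x.

Definition minimal_tropical_basis n (Cs B : {set {set 'I_n}}) : Prop :=
  tropical_basis Cs B /\ forall B' : {set {set 'I_n}}, B' \proper B -> ~ tropical_basis Cs B'.

(* Main.v *)
From Stdlib Require Import Reals Classical.
Require Import Defs.
From mathcomp Require Import all_boot all_order all_algebra zify.
Set Implicit Arguments. Unset Strict Implicit. Unset Printing Implicit Defensive.
Import GRing.Theory.

Lemma F2_nz (x : 'F_2) : x != 0%R -> x = 1%R.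
Proof. by case: x => [[|[|m]] hm] //= _; apply: val_inj. Qed.

Lemma trop_le_refl a : trop_le a a.
Proof. by case: a => [x|] //=; apply: Rle_refl. Qed.
Lemma trop_le_trans a b c : trop_le a b -> trop_le b c -> trop_le a c.
Proof. case: a => [x|]; case: b => [y|]; case: c => [z|] //=; apply: Rle_trans. Qed.
Lemma trop_le_total a b : trop_le a b \/ trop_le b a.
Proof.
case: a => [x|]; case: b => [y|] /=; auto.
destruct (Rle_lt_dec x y) as [h|h]; [left|right; apply Rlt_le]; auto.
Qed.
Lemma trop_le_antisym a b : trop_le a b -> trop_le b a -> a = b.
Proof. case: a => [x|]; case: b => [y|] //= h1 h2. by rewrite (Rle_antisym _ _ h1 h2). Qed.

Lemma argmax_seq (T : eqType) (f : T -> trop) (s : seq T) :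
  s != [::] -> exists2 i, i \in s & forall k, k \in s -> trop_le (f k) (f i).
Proof.
elim: s => // a s IH _.
case: s IH => [|b s] IH.
  exists a; first by rewrite mem_seq1.
  by move=> k; rewrite mem_seq1 => /eqP ->; apply: trop_le_refl.
have [i Hi Hmax] := IH erefl.
case: (trop_le_total (f a) (f i)) => h.
- exists i; first by rewrite inE Hi orbT.
  move=> k; rewrite inE => /orP [/eqP ->|]; [exact h | exact: Hmax].
- exists a; first by rewrite inE eqxx.
  move=> k; rewrite inE => /orP [/eqP ->|hk]; [exact: trop_le_refl| exact: trop_le_trans (Hmax _ hk) h].
Qed.

Lemma argmax_set n (f : 'I_n -> trop) (C : {set 'I_n}) : C != set0 ->
  exists2 i, i \in C & forall k, k \in C -> trop_le (f k) (f i).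
Proof.
move=> hC; have [|i Hi Hm] := @argmax_seq _ f (enum C).
  case/set0Pn: hC => x hx; apply/eqP => e; have := mem_enum C x.
  by rewrite e hx.
exists i; first by rewrite -mem_enum.
by move=> k hk; apply: Hm; rewrite mem_enum.
Qed.

Lemma notin_small n (S : {set 'I_n}) : #|S| < n -> exists x, x \notin S.
Proof.
move=> h; have hc := cardsC S; rewrite card_ord in hc.
have : 0 < #|~: S| by lia.
by case/card_gt0P => x; rewrite inE => hx; exists x.
Qed.

Lemma exists_card n k : k <= n -> exists S : {set 'I_n}, #|S| = k.
Proof.
elim: k => [|k IH] hk; first by exists set0; rewrite cards0.
have [S hS] := IH (ltnW hk).
have [x hx] : exists x, x \notin S by apply: notin_small; rewrite hS.
by exists (x |: S); rewrite cardsU1 hx hS.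
Qed.

Lemma empty_not_TB d n : d < n -> ~ tropical_basis (uniform_circuits d n) set0.
Proof.
move=> hdn [_ H].
have [C hC] := @exists_card n d.+1 hdn.
have [c hc] : exists c, c \in C by apply/card_gt0P; rewrite hC.
pose x := fun i : 'I_n => if i == c then Some R0 else None.
have : V_of set0 x.
  split; first by exists c; rewrite /x eqxx.
  by move=> C'; rewrite inE.
move/H => [_ /(_ C)].
have hCin : C \in uniform_circuits d n by rewrite inE hC.
move=> /(_ hCin) [i [j [hi hj hij hxij hmax]]].
have ei : i = c.
  apply/eqP; move: (hmax c hc); rewrite /x eqxx; by case: (i == c).
move: hxij hij; rewrite ei /x eqxx; case: eqP => // -> _.
by rewrite eqxx.
Qed.

Lemma remove_TB d n C0 : 0 < d -> d.+2 <= n -> C0 \in uniform_circuits d n ->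
  tropical_basis (uniform_circuits d n) (uniform_circuits d n :\ C0).
Proof.
move=> hd hn hC0; split; first exact: subsetDl.
move=> x; split; last first.
  by case=> hp H; split=> // C; rewrite in_setD1 => /andP [_]; apply: H.
case=> hp H; split=> // C hC.
case: (eqVneq C C0) => [->| hne]; last by apply: H; rewrite in_setD1 hne hC.
have hC0c : #|C0| = d.+1 by move: hC0; rewrite inE => /eqP.
apply: NNPP => hnot.
have [i hi himax] := @argmax_set n x C0 ltac:(by rewrite -card_gt0 hC0c).
have strict : forall j, j \in C0 -> j != i -> ~ trop_le (x i) (x j).
  move=> j hj hji hle; apply: hnot; exists i, j; split=> //.
    by rewrite eq_sym.
  by apply: trop_le_antisym => //; exact: himax.
have [k hk] : exists k, k \notin C0 by apply: notin_small; rewrite hC0c.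
have swap : forall z, z \in C0 -> k |: (C0 :\ z) \in uniform_circuits d n :\ C0.
  move=> z hz; rewrite in_setD1; apply/andP; split.
    apply/negP => /eqP e; move: hk; by rewrite -e setU11.
  rewrite inE cardsU1 in_setD1 (negbTE hk) andbF /=.
  by move: (cardsD1 z C0); rewrite hz hC0c => ->.
have [j hj] : exists j, j \in C0 :\ i.
  apply/card_gt0P; move: (cardsD1 i C0); rewrite hi hC0c add1n => -[<-] //.
move: hj; rewrite in_setD1 => /andP [hji hj].
case: (classic (trop_le (x i) (x k))) => hA.
- have := H _ (swap i hi) => -[a [b [ha hb hab hxab hm]]].
  have hkC : k \in k |: (C0 :\ i) by rewrite setU11.
  have [y [hy hyk hky]] : exists y, [/\ y \in k |: (C0 :\ i), y != k & trop_le (x k) (x y)].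
    case: (eqVneq a k) => [eak|nak].
    + exists b; split=> //; first by rewrite -eak eq_sym.
      rewrite -hxab; exact: hm.
    + by exists a; split=> //; exact: hm.
  move: hy; rewrite in_setU1 (negbTE hyk) /= in_setD1 => /andP [hyi hy0].
  exact: strict hy0 hyi (trop_le_trans hA hky).
- have := H _ (swap j hj) => -[a [b [ha hb hab hxab hm]]].
  have hiC : i \in k |: (C0 :\ j) by rewrite in_setU1 in_setD1 (eq_sym i j) hji hi orbT.
  have [y [hy hyi hiy]] : exists y, [/\ y \in k |: (C0 :\ j), y != i & trop_le (x i) (x y)].
    case: (eqVneq a i) => [eai|nai].
    + exists b; split=> //; first by rewrite -eai eq_sym.
      rewrite -hxab; exact: hm.
    + by exists a; split=> //; exact: hm.
  move: hy; rewrite in_setU1 => /orP [/eqP eyk|].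
    by apply: hA; rewrite -eyk.
  rewrite in_setD1 => /andP [_ hy0].
  exact: strict hy0 hyi hiy.
Qed.

Lemma descent n (Cs : {set {set 'I_n}}) B : tropical_basis Cs B ->
  exists2 B' : {set {set 'I_n}}, B' \subset B & minimal_tropical_basis Cs B'.
Proof.
have [m hm] : exists m, #|B| < m by exists #|B|.+1.
elim: m B hm => // m IH B hB hTB.
case: (classic (forall B' : {set {set 'I_n}}, B' \proper B -> ~ tropical_basis Cs B')) => h.
  by exists B => //; split.
have [B' hB'] := not_all_ex_not _ _ h.
have [hp hT] := imply_to_and _ _ hB'.
have hT' := NNPP _ hT.
have hc : #|B'| < m by move: (proper_card hp) hB; lia.
have [B'' h1 h2] := IH B' hc hT'.
by exists B'' => //; exact: subset_trans h1 (proper_sub hp).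
Qed.

Lemma not_unique d n : 0 < d -> d.+2 <= n ->
  ~ exists! B, minimal_tropical_basis (uniform_circuits d n) B.
Proof.
move=> hd hn [B0 [hmin huniq]].
have hB0 : B0 = set0.
  apply/setP => C; rewrite inE; apply/negP => hC.
  have hCs : C \in uniform_circuits d n by move: hmin => [[/subsetP hs _] _]; exact: hs.
  have [B' hB' hm'] := descent (remove_TB hd hn hCs).
  have e := huniq B' hm'.
  by move: (subsetP hB' C); rewrite -e hC in_setD1 eqxx => /(_ isT).
move: hmin => [hT _]; rewrite hB0 in hT.
by apply: (@empty_not_TB d n) => //; lia.
Qed.
Local Open Scope ring_scope.

Lemma not_binary d n : (1 < d)%N -> (d.+2 <= n)%N -> ~ binary (uniform_circuits d n).
Proof.
move=> hd hn [r [A HA]].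
have indep : forall S : {set 'I_n}, (#|S| <= d)%N -> cols_indep A S.
  move=> S hS; apply/HA => -[C]; rewrite inE => /eqP hC hCS.
  by have := subset_leq_card hCS; rewrite hC; lia.
have circ : forall C : {set 'I_n}, #|C| = d.+1 -> \sum_(i in C) col i A = 0.
  move=> C hC.
  have hdep : ~ cols_indep A C by move/HA; apply; exists C => //; rewrite inE hC.
  rewrite /cols_indep in hdep.
  have [a ha] := not_all_ex_not _ _ hdep.
  have [hsum hn'] := imply_to_and _ _ ha.
  have [i hi'] := not_all_ex_not _ _ hn'.
  have [hi hai] := imply_to_and _ _ hi'.
  have all1 : forall j, j \in C -> a j = 1.
    move=> j hj; apply: F2_nz; apply/eqP => haj.
    have hS : cols_indep A (C :\ j).
      by apply: indep; move: (cardsD1 j C); rewrite hj hC; lia.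
    have : \sum_(i in C :\ j) a i *: col i A = 0.
      move: hsum; rewrite (bigD1 j hj) /= haj scale0r add0r => hsum.
      rewrite -[in RHS]hsum.
      by apply: eq_bigl => z; rewrite in_setD1 andbC.
    move/hS => /(_ i) h; apply hai; apply: h.
    rewrite in_setD1 hi andbT; apply/eqP => eij; apply: hai; by rewrite eij.
  rewrite -[in RHS]hsum; apply: eq_bigr => j hj; by rewrite all1 // scale1r.
have [T hT] := @exists_card n d ltac:(lia).
have [b hb] : exists b, b \notin T by apply: notin_small; rewrite hT; lia.
have [b' hb'] : exists b', b' \notin b |: T.
  by apply: notin_small; rewrite cardsU1 hb hT; lia.
have hbb : b' != b by apply: contraNneq hb' => ->; rewrite setU11.
have hb'T : b' \notin T by apply: contra hb'; rewrite in_setU1 => ->; rewrite orbT.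
have e1 := circ (b |: T) ltac:(by rewrite cardsU1 hb hT).
have e2 := circ (b' |: T) ltac:(by rewrite cardsU1 hb'T hT).
rewrite big_setU1 //= in e1. rewrite big_setU1 //= in e2.
have ecol : col b A = col b' A by apply: (addIr (\sum_(i in T) col i A)); rewrite e1 e2.
have hS : cols_indep A [set b; b'] by apply: indep; rewrite cards2; lia.
have := hS (fun z => if z == b then 1 else -1).
rewrite big_setU1 ?in_set1 1?eq_sym //= big_set1 eqxx (negbTE hbb) ecol.
rewrite scale1r scaleN1r subrr => /(_ erefl b); rewrite eqxx setU11 => /(_ isT) /eqP.
by rewrite oner_eq0.
Qed.

Lemma sum_delta (F : fieldType) n (S : {set 'I_n}) (a : 'I_n -> F) i :
  \sum_(k in S) a k * (i == k)%:R = if i \in S then a i else 0.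
Proof.
rewrite (bigID (pred1 i)) /= [X in _ + X]big1 ?addr0; last first.
  by move=> k /andP [_ hk]; rewrite eq_sym (negbTE hk) mulr0.
case: ifP => hi.
- rewrite (big_pred1 i) ?eqxx ?mulr1 // => k /=.
  by case: eqP => [->|]; rewrite ?hi ?andbF ?andbT.
- rewrite big_pred0 // => k /=.
  by case: eqP => [->|]; rewrite ?hi ?andbF.
Qed.

Lemma reg_nn n : regular (uniform_circuits n n).
Proof.
move=> F; exists n, 1%:M => S; split.
  move=> _ [C]; rewrite inE => /eqP hC _.
  by have := max_card C; rewrite card_ord hC; lia.
move=> _ a hs i hi.
have := congr1 (fun M : 'M[F]_(n,1) => M i ord0) hs; rewrite summxE mxE.
under eq_bigr => k _ do rewrite !mxE.
by rewrite sum_delta hi.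
Qed.

Lemma reg_d d : regular (uniform_circuits d d.+1).
Proof.
move=> F.
pose A : 'M[F]_(d, d.+1) :=
  \matrix_(j, i) ((widen_ord (leqnSn d) j == i)%:R + (ord_max == i)%:R).
have entry : forall (S : {set 'I_d.+1}) (a : 'I_d.+1 -> F) j,
   (\sum_(i in S) a i *: col i A) j ord0 =
   (if widen_ord (leqnSn d) j \in S then a (widen_ord (leqnSn d) j) else 0) +
   (if ord_max \in S then a ord_max else 0).
  move=> S a j; rewrite summxE.
  under eq_bigr => k _ do rewrite !mxE mulrDr.
  by rewrite big_split /= !sum_delta.
have hwid : forall j : 'I_d, widen_ord (leqnSn d) j != ord_max.
  by move=> j; apply/eqP => /(congr1 val) /= e; have := ltn_ord j; rewrite e ltnn.
have CsT : forall C, C \in uniform_circuits d d.+1 -> C = setT.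
  move=> C; rewrite inE => /eqP hC.
  by apply/eqP; rewrite eqEcard subsetT cardsT card_ord hC leqnn.
exists d, A => S; split.
- move=> hind [C /CsT eC]; rewrite eC => hS.
  have eS : S = setT by apply/eqP; rewrite eqEsubset subsetT.
  pose a := fun k : 'I_d.+1 => if k == ord_max then -1 else 1 : F.
  have : \sum_(i in S) a i *: col i A = 0.
    apply/matrixP => j k; rewrite (ord1 k) entry eS !inE mxE /a.
    by rewrite (negbTE (hwid j)) eqxx addrN.
  move/hind => /(_ ord_max); rewrite eS inE /a eqxx => /(_ isT) /eqP.
  by rewrite oppr_eq0 oner_eq0.
- move=> hne a hs.
  have [m hm] : exists m, m \notin S.
    apply: NNPP => hno; apply: hne; exists setT.
      by rewrite inE cardsT card_ord.
    apply/subsetP => m _; apply: NNPP => hm; apply: hno; exists m; exact/negP.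
  have t0 : (if ord_max \in S then a ord_max else 0) = 0.
    case: ifP => // hmax.
    have hmd : (m < d)%N.
      have : m != ord_max by apply: contraNneq hm => ->.
      move: (ltn_ord m); move=> h1 /eqP h2; have : nat_of_ord m != d.
        by apply/eqP => e; apply: h2; apply: val_inj.

      lia.
    have := congr1 (fun M : 'M[F]_(d,1) => M (Ordinal hmd) ord0) hs; rewrite entry mxE.
    have -> : widen_ord (leqnSn d) (Ordinal hmd) = m by apply: val_inj.
    by rewrite (negbTE hm) add0r hmax.
  move=> i hi.
  case: (eqVneq i ord_max) => [ei|nei].
    by move: t0; rewrite ei -ei hi.
  have hid : (i < d)%N.
    move: (ltn_ord i) => h1; have : nat_of_ord i != d.
      by apply/eqP => e; move/eqP: nei; apply; apply: val_inj.
    lia.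
  have := congr1 (fun M : 'M[F]_(d,1) => M (Ordinal hid) ord0) hs; rewrite entry mxE t0 addr0.
  have -> : widen_ord (leqnSn d) (Ordinal hid) = i by apply: val_inj.
  by rewrite hi.
Qed.

Lemma uniq_nn n : exists! B, minimal_tropical_basis (uniform_circuits n n) B.
Proof.
have Cs0 : forall C, C \notin uniform_circuits n n.
  move=> C; rewrite inE; apply/eqP => hC.
  by have := max_card C; rewrite card_ord hC ltnn.
have sub0 : forall B : {set {set 'I_n}}, B \subset uniform_circuits n n -> B = set0.
  move=> B /subsetP hB; apply/setP => C; rewrite inE; apply/negP => /hB.
  by rewrite (negbTE (Cs0 C)).
exists set0; split.
  split.
    split; first exact: sub0set.
    move=> x; split; case=> hp _; split=> // C; first by rewrite (negbTE (Cs0 C)).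
    by rewrite inE.
  move=> B' hp; have := proper_sub hp; rewrite subset0 => /eqP e.
  by move: hp; rewrite e (negbTE (proper_irrefl _)).
by move=> B' [[hs _] _]; rewrite (sub0 _ hs).
Qed.

Lemma uniq_d d : exists! B, minimal_tropical_basis (uniform_circuits d d.+1) B.
Proof.
have CsT : forall C, C \in uniform_circuits d d.+1 -> C = setT.
  move=> C; rewrite inE => /eqP hC.
  by apply/eqP; rewrite eqEcard subsetT cardsT card_ord hC leqnn.
have TBe : forall B, tropical_basis (uniform_circuits d d.+1) B ->
    B = uniform_circuits d d.+1.
  move=> B hTB; have hs := hTB.1.
  apply/eqP; rewrite eqEsubset hs /=; apply/subsetP => C hC.
  rewrite (CsT C hC).
  apply: NNPP => hno.
  have eB : B = set0.
    apply/setP => C'; rewrite inE; apply/negP => hC'.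
    have := CsT C' (subsetP hs _ hC'); move=> e; apply: hno; rewrite -e.
    exact/idP.
  by apply: (@empty_not_TB d d.+1) => //; rewrite -eB.
have TBC : tropical_basis (uniform_circuits d d.+1) (uniform_circuits d d.+1).
  by split=> //; exact: subxx.
exists (uniform_circuits d d.+1); split.
  split=> // B' hp hT.
  by move: hp; rewrite (TBe _ hT) (negbTE (proper_irrefl _)).
by move=> B' [hT _]; rewrite (TBe _ hT).
Qed.

Local Close Scope ring_scope.

Theorem proposition3 (d n : nat) (hdn : d <= n)
  (hsimple : simple_matroid (uniform_circuits d n)) :
  (regular (uniform_circuits d n) <-> binary (uniform_circuits d n)) /\
  (binary (uniform_circuits d n) <->
     exists! B, minimal_tropical_basis (uniform_circuits d n) B).
Proof.
case: (ltnP d.+1 n) => hlt.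
- have hd : (1 < d)%N.
    have [C hC] := @exists_card n d.+1 (ltnW hlt).
    have := hsimple C; rewrite inE hC eqxx => /(_ isT); lia.
  have nb := not_binary hd hlt.
  have nu := @not_unique d n ltac:(lia) hlt.
  split; split => h; exfalso.
  + by apply: nb; exact: (h _).
  + exact: nb h.
  + exact: nb h.
  + exact: nu h.
- have : n = d \/ n = d.+1 by lia.
  case=> e; subst n.
  + split; split => _; first (by exact: (reg_nn _ _)); first exact: reg_nn.
    * exact: uniq_nn.
    * exact: (reg_nn _ _).
  + split; split => _; first (by exact: (reg_d _ _)); first exact: reg_d.
    * exact: uniq_d.
    * exact: (reg_d _ _).
Qed.
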